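(* Let $H_0$ be a Hermitian operator on a finite-dimensional Hilbert space with ground-space projection $P_0$, $Q_0=I-P_0$, ground energy $E_0$, $G=Q_0(E_0I-H_0)^{-1}Q_0$, and $V$ Hermitian. Then $V_{\mathrm{od}}\in\Gamma^\star(1)$, $S_n\in\Gamma^\star(n)$ for every $n\in\mathbb{N}$, and $\hat S^k(V_{\mathrm{od}})_m\in\Gamma(m+1)$ for all $k,m$.
   Context: $\Gamma(n)$ is the linear span of operators $Z_0VZ_1V\cdots Z_{n-1}VZ_n$ ($n$ factors of $V$) with each $Z_j\in\{P_0,Q_0\}\cup\{G^m:m\in\mathbb{N}\}$; $\Gamma^\star(n)\subseteq\Gamma(n)$ is the span of such products that additionally satisfy $Z_0Z_n=Z_nZ_0=0$. Set $V_{\mathrm d}=P_0VP_0+Q_0VQ_0$, $V_{\mathrm{od}}=P_0VQ_0+Q_0VP_0$, $\mathcal{L}(X)=P_0XG-GXP_0$, $\mathrm{ad}_S(X)=[S,X]$, $a_m=2^m\beta_m/m!$ with $\beta_m$ the Bernoulli numbers. Define $S_1=\mathcal{L}(V_{\mathrm{od}})$, $S_2=-\mathcal{L}(\mathrm{ad}_{V_{\mathrm d}}(S_1))$, and for $n\ge3$, $S_n=-\mathcal{L}(\mathrm{ad}_{V_{\mathrm d}}(S_{n-1}))+\sum_{j\ge1}a_{2j}\mathcal{L}(\hat S^{2j}(V_{\mathrm{od}})_{n-1})$, where $\hat S^k(V_{\mathrm{od}})_m=\sum_{n_1,\dots,n_k\ge1,\ \sum_r n_r=m}\mathrm{ad}_{S_{n_1}}\cdots\mathrm{ad}_{S_{n_k}}(V_{\mathrm{od}})$.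 *)

(* Defs.v *)
From HB Require Import structures.
From mathcomp Require Import all_boot all_order all_algebra.
Set Implicit Arguments. Unset Strict Implicit. Unset Printing Implicit Defensive.
Import Order.TTheory GRing.Theory Num.Theory.
Local Open Scope ring_scope.

(* Bernoulli numbers (convention beta_1 = -1/2; only even indices are used):
   beta_0 = 1, beta_m = -1/(m+1) * sum_{k<m} C(m+1,k) beta_k. *)
Fixpoint bernoulli_seq (m : nat) : seq rat :=
  match m with
  | 0 => [:: 1]
  | m'.+1 =>
      let s := bernoulli_seq m' in
      rcons s (- (m'.+2%:R)^-1 *
                 \sum_(k < m'.+1) ('C(m'.+2, k))%:R * nth 0 s k)
  end.
Definition bernoulli (m : nat) : rat := nth 0 (bernoulli_seq m) m.

Definition a_coef (m : nat) : rat := 2%:R ^+ m * bernoulli m / (m`!)%:R.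

Section Ops.
Variables (C : numClosedFieldType) (N : nat).
Local Notation M := 'M[C]_N.

Definition adjmx (A : M) : M := (map_mx Num.conj A)^T.
Definition herm_mx (A : M) : Prop := adjmx A = A.

Definition ground_energy (H0 : M) (E0 : C) : Prop :=
  eigenvalue H0 E0 /\ forall a, eigenvalue H0 a -> E0 <= a.

(* P0 is the (orthogonal) projection onto the ground space
   ker (H0 - E0) (row-vector convention of mxalgebra). *)
Definition ground_projection (H0 : M) (E0 : C) (P0 : M) : Prop :=
  [/\ adjmx P0 = P0, P0 *m P0 = P0 & (P0 == eigenspace H0 E0)%MS].

(* G = Q0 (E0 I - H0)^{-1} Q0, the inverse of E0 - H0 restricted to the range
   of Q0 = 1 - P0 (extended by 0 on the ground space).  Since E0 - H0 vanishes on
   the ground space and is invertible on its complement, E0 - H0 + P0 is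
   invertible and its inverse agrees with (E0 - H0)^{-1} on ran Q0. *)
Definition reduced_resolvent (H0 : M) (E0 : C) (P0 : M) : M :=
  (1%:M - P0) *m invmx (E0%:M - H0 + P0) *m (1%:M - P0).

Variables (P0 G V : M).
Definition Q0 : M := 1%:M - P0.

Inductive Zlab := ZP | ZQ | ZG of nat (* ZG k stands for G^(k+1) *).
Definition Zval (z : Zlab) : M :=
  match z with ZP => P0 | ZQ => Q0 | ZG k => G ^+ k.+1 end.

(* Z_0 V Z_1 V ... V Z_n for the word [:: Z_0; ...; Z_n] *)
Fixpoint Zprod_from (A : M) (w : seq Zlab) : M :=
  match w with
  | [::] => A
  | z :: w' => Zprod_from (A *m V *m Zval z) w'
  end.
Definition Zprod (w : seq Zlab) : M :=
  match w with [::] => 1%:M | z :: w' => Zprod_from (Zval z) w' end.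

Definition first_Z (w : seq Zlab) : M := Zval (head ZP w).
Definition last_Z (w : seq Zlab) : M := Zval (last ZP w).

(* Gamma(n): linear span of the products with n factors of V *)
Definition Gamma (n : nat) (X : M) : Prop :=
  exists (ws : seq (seq Zlab)) (cs : seq C),
    all (fun w => size w == n.+1) ws /\
    X = \sum_(i < size ws) cs`_i *: Zprod (nth [::] ws i).

Definition Gamma_star (n : nat) (X : M) : Prop :=
  exists (ws : seq (seq Zlab)) (cs : seq C),
    all (fun w => size w == n.+1) ws /\
    (forall i : 'I_(size ws), let w := nth [::] ws i in
       first_Z w *m last_Z w = 0 /\ last_Z w *m first_Z w = 0) /\
    X = \sum_(i < size ws) cs`_i *: Zprod (nth [::] ws i).

Definition Vd : M := P0 *m V *m P0 + Q0 *m V *m Q0.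
Definition Vod : M := P0 *m V *m Q0 + Q0 *m V *m P0.
Definition Lop (X : M) : M := P0 *m X *m G - G *m X *m P0.
Definition ad (S X : M) : M := S *m X - X *m S.

(* hat S^k (Vod)_m, given the family S_1, S_2, ... as a function S:
   sum over n_1,...,n_k >= 1 with n_1+...+n_k = m of
   ad_{S_{n_1}} ... ad_{S_{n_k}} (Vod).  (k = 0: Vod if m = 0, else 0.) *)
Fixpoint Shat_with (S : nat -> M) (k m : nat) : M :=
  match k with
  | 0 => if m == 0%N then Vod else 0
  | k'.+1 => \sum_(1 <= n1 < m.+1) ad (S n1) (Shat_with S k' (m - n1))
  end.

(* Given s = [:: S_1; ...; S_n'], compute S_{n'+1}.  The sum over j >= 1 is
   truncated at j <= n', which is exact since hat S^{2j}(Vod)_{n'} = 0 when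
   2j > n' (empty set of compositions). *)
Definition Snext (s : seq M) (n' : nat) : M :=
  let S := fun i => nth 0 s i.-1 in
  match n' with
  | 0 => Lop Vod
  | 1 => - Lop (ad Vd (S 1%N))
  | _ => - Lop (ad Vd (S n')) +
         \sum_(1 <= j < n'.+1) ratr (a_coef (2 * j)) *: Lop (Shat_with S (2 * j) n')
  end.

Fixpoint Sseq (n : nat) : seq M :=
  match n with
  | 0 => [::]
  | n'.+1 => let s := Sseq n' in rcons s (Snext s n')
  end.

(* S_n for n >= 1 *)
Definition Sgen (n : nat) : M := nth 0 (Sseq n) n.-1.
Definition Shat (k m : nat) : M := Shat_with Sgen k m.

End Ops.

(* Main.v *)
Require Import Defs.
From HB Require Import structures.
From mathcomp Require Import all_boot all_order all_algebra.
From mathcomp Require Import zify.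
Import Order.TTheory GRing.Theory Num.Theory.
Local Open Scope ring_scope.

Section Proof.
Variables (C : numClosedFieldType) (N : nat) (P0 G V : 'M[C]_N).
Hypothesis hPP : P0 *m P0 = P0.
Hypothesis hPG : P0 *m G = 0.
Hypothesis hGP : G *m P0 = 0.

Local Notation M := 'M[C]_N.
Local Notation Zv := (Zval P0 G).
Local Notation Zp := (Zprod P0 G V).

Definition zmul (a b : Zlab) : option Zlab :=
  match a, b with
  | ZP, ZP => Some ZP
  | ZQ, ZQ => Some ZQ
  | ZQ, ZG k => Some (ZG k)
  | ZG k, ZQ => Some (ZG k)
  | ZG j, ZG k => Some (ZG (j + k).+1)
  | _, _ => None
  end.
Definition oZ (o : option Zlab) : M := if o is Some b then Zv b else 0.

Lemma hPQ : P0 *m Q0 P0 = 0.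
Proof. by rewrite /Q0 mulmxBr mulmx1 hPP subrr. Qed.
Lemma hQP : Q0 P0 *m P0 = 0.
Proof. by rewrite /Q0 mulmxBl mul1mx hPP subrr. Qed.
Lemma hQQ : Q0 P0 *m Q0 P0 = Q0 P0.
Proof. by rewrite {1}/Q0 mulmxBl mul1mx hPQ subr0. Qed.
Lemma hQG : Q0 P0 *m G = G.
Proof. by rewrite /Q0 mulmxBl mul1mx hPG subr0. Qed.
Lemma hGQ : G *m Q0 P0 = G.
Proof. by rewrite /Q0 mulmxBr mulmx1 hGP subr0. Qed.

Lemma GS k : G ^+ k.+1 = G *m G ^+ k.
Proof. by rewrite exprS mulmxE. Qed.
Lemma GSr k : G ^+ k.+1 = G ^+ k *m G.
Proof. by rewrite exprSr mulmxE. Qed.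

Lemma Zval_mul a b : Zv a *m Zv b = oZ (zmul a b).
Proof.
case: a => [||j]; case: b => [||k] /=; rewrite ?hPP ?hPQ ?hQP ?hQQ //.
- by rewrite GS mulmxA hPG mul0mx.
- by rewrite GS mulmxA hQG.
- by rewrite GSr -mulmxA hGP mulmx0.
- by rewrite GSr -mulmxA hGQ.
- by rewrite mulmxE -exprD addSn addnS.
Qed.

Fixpoint Rw (w : seq Zlab) : M := if w is z :: w' then V *m Zv z *m Rw w' else 1%:M.
Fixpoint Lw (w : seq Zlab) : M := if w is z :: w' then Zv z *m V *m Lw w' else 1%:M.

Lemma Zprod_fromE A w : Zprod_from P0 G V A w = A *m Rw w.
Proof.
elim: w A => [|z w IH] A /=; first by rewrite mulmx1.
by rewrite IH !mulmxA.
Qed.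

Lemma RV w : Rw w *m V = V *m Lw w.
Proof.
elim: w => [|z w IH] /=; first by rewrite mulmx1 mul1mx.
by rewrite -mulmxA IH !mulmxA.
Qed.

Lemma Rcat u v : Rw (u ++ v) = Rw u *m Rw v.
Proof.
elim: u => [|z u IH] /=; first by rewrite mul1mx.
by rewrite IH !mulmxA.
Qed.

Lemma ZprodE u z w : Zp (u ++ z :: w) = Lw u *m Zv z *m Rw w.
Proof.
case: u => [|z0 u] /=; first by rewrite Zprod_fromE mul1mx.
rewrite Zprod_fromE Rcat /= !mulmxA -(mulmxA (Zv z0)) RV !mulmxA.
by rewrite -(mulmxA (Zv z0 *m V)) -(mulmxA (Zv z0)) !mulmxA.
Qed.

Lemma ZpC z w : Zp (z :: w) = Zv z *m Rw w.
Proof. by rewrite /= Zprod_fromE. Qed.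

Lemma ZpR u z : Zp (rcons u z) = Lw u *m Zv z.
Proof. by rewrite -cats1 ZprodE /= mulmx1. Qed.

Lemma Zp_mul u z z' w : Zp (rcons u z) *m Zp (z' :: w) =
  if zmul z z' is Some b then Zp (u ++ b :: w) else 0.
Proof.
rewrite ZpR ZpC !mulmxA -(mulmxA (Lw u)) Zval_mul.
case: (zmul z z') => [b|]; first by rewrite ZprodE.
by rewrite mulmx0 mul0mx.
Qed.

Local Arguments Zprod : simpl never.

Lemma lmul a z w : Zv a *m Zp (z :: w) =
  if zmul a z is Some b then Zp (b :: w) else 0.
Proof.
rewrite ZpC mulmxA Zval_mul; case: (zmul a z) => [b|].
  by rewrite ZpC.
by rewrite mul0mx.
Qed.

Lemma rmul u z a : Zp (rcons u z) *m Zv a =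
  if zmul z a is Some b then Zp (rcons u b) else 0.
Proof.
rewrite ZpR -mulmxA Zval_mul; case: (zmul z a) => [b|].
  by rewrite ZpR.
by rewrite mulmx0.
Qed.

Definition Sp (Pw : seq Zlab -> Prop) (X : M) := exists (ws : seq (seq Zlab)) (cs : seq C),
  (forall i, (i < size ws)%N -> Pw (nth [::] ws i)) /\
  X = \sum_(0 <= i < size ws) cs`_i *: Zp (nth [::] ws i).

Lemma Sp0 Pw : Sp Pw 0.
Proof. by exists [::], [::]; split => //; rewrite big_nil. Qed.

Lemma Sp_word (Pw : seq Zlab -> Prop) w : Pw w -> Sp Pw (Zp w).
Proof.
move=> h; exists [:: w], [:: 1]; split; first by case.
by rewrite big_nat1 scale1r.
Qed.

Lemma SpD Pw X Y : Sp Pw X -> Sp Pw Y -> Sp Pw (X + Y).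
Proof.
move=> [ws1 [cs1 [h1 ->]]] [ws2 [cs2 [h2 ->]]].
exists (ws1 ++ ws2), (mkseq (fun i => cs1`_i) (size ws1) ++ cs2); split.
  move=> i; rewrite size_cat nth_cat; case: ifP => hi hi2.
    exact: h1.
  apply: h2; lia.
rewrite size_cat [in RHS](big_cat_nat _ (n := size ws1)) ?leq_addr //=; congr (_ + _).
  apply: eq_big_nat => i /andP[_ hi].
  by rewrite !nth_cat size_mkseq hi nth_mkseq.
rewrite -{1}[size ws1]add0n big_addn addKn.
apply: eq_big_nat => i _.
rewrite !nth_cat size_mkseq.
have -> : (i + size ws1 < size ws1)%N = false by lia.
by rewrite addnK.
Qed.

Lemma SpZ Pw c X : Sp Pw X -> Sp Pw (c *: X).
Proof.
move=> [ws [cs [h ->]]].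
exists ws, (mkseq (fun i => c * cs`_i) (size ws)); split => //.
rewrite scaler_sumr; apply: eq_big_nat => i /andP[_ hi].
by rewrite nth_mkseq // scalerA.
Qed.

Lemma SpN Pw X : Sp Pw X -> Sp Pw (- X).
Proof. by move=> h; rewrite -scaleN1r; apply: SpZ. Qed.

Lemma Sp_sum Pw m n (F : nat -> M) :
  (forall i, (m <= i < n)%N -> Sp Pw (F i)) -> Sp Pw (\sum_(m <= i < n) F i).
Proof.
move=> h; rewrite big_nat_cond; apply: big_ind.
- exact: Sp0.
- exact: SpD.
- by move=> i /andP[hi _]; apply: h.
Qed.

Lemma Sp_lin (Pw Qw : seq Zlab -> Prop) (f : M -> M) X :
  (forall x y, f (x + y) = f x + f y) -> (forall c x, f (c *: x) = c *: f x) ->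
  (forall w, Pw w -> Sp Qw (f (Zp w))) -> Sp Pw X -> Sp Qw (f X).
Proof.
move=> fD fZ hw [ws [cs [h ->]]].
have f0 : f 0 = 0 by have := fZ 0 0; rewrite !scale0r.
rewrite (big_morph f fD f0); apply: Sp_sum => i /andP[_ hi].
rewrite fZ; apply: SpZ; exact: hw (h i hi).
Qed.

Definition sizeP (n : nat) (w : seq Zlab) : Prop := size w = n.+1.
Definition starP (n : nat) (w : seq Zlab) : Prop := size w = n.+1 /\
  (first_Z P0 G w *m last_Z P0 G w = 0 /\ last_Z P0 G w *m first_Z P0 G w = 0).

Lemma Sp_mulmx a b Y X : Sp (sizeP a) Y -> Sp (sizeP b) X -> Sp (sizeP (a + b)) (Y *m X).
Proof.
move=> hY hX.
apply: (@Sp_lin _ _ (fun Y => Y *m X)) hY.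
- by move=> x y; rewrite mulmxDl.
- by move=> c x; rewrite scalemxAl.
move=> u hu; apply: (@Sp_lin _ _ (fun X => Zp u *m X)) hX.
- by move=> x y; rewrite mulmxDr.
- by move=> c x; rewrite scalemxAr.
move=> v hv.
case/lastP: u hu => [|u z] hu; first by [].
case: v hv => [|z' v] hv; first by [].
rewrite Zp_mul; case: (zmul z z') => [bb|]; last exact: Sp0.
apply: Sp_word; move: hu hv; rewrite /sizeP size_cat size_rcons /=; lia.
Qed.

Lemma Sp_ad a b X Y : Sp (sizeP a) X -> Sp (sizeP b) Y -> Sp (sizeP (a + b)) (ad X Y).
Proof.
move=> hX hY; rewrite /ad; apply: SpD; first exact: Sp_mulmx.
by apply: SpN; rewrite addnC; apply: Sp_mulmx.
Qed.

Lemma Sp_Lop n X : Sp (sizeP n) X -> Sp (starP n) (Lop P0 G X).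
Proof.
move=> hX; rewrite /Lop; apply: SpD; last apply: SpN.
- apply: (@Sp_lin _ _ (fun X => P0 *m X *m G)) hX.
  + by move=> x y; rewrite mulmxDr mulmxDl.
  + by move=> c x; rewrite scalemxAl scalemxAr.
  move=> [|z v] hv; first by [].
  have := lmul ZP z v; rewrite [Zv ZP]/= => ->.
  case: z hv => [||j] hv /=; rewrite ?mul0mx; try exact: Sp0.
  rewrite (lastI ZP v).
  have := rmul (belast ZP v) (last ZP v) (ZG 0); rewrite [Zv (ZG 0)]/= expr1 => ->.
  case E: (last ZP v) => [||j] /=; try exact: Sp0;
  (case: v hv E => [|x v] hv E; first by []);
  apply: Sp_word; (split; [by rewrite size_rcons size_belast | ]);
  rewrite /first_Z /last_Z last_rcons; split; by rewrite Zval_mul.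
- apply: (@Sp_lin _ _ (fun X => G *m X *m P0)) hX.
  + by move=> x y; rewrite mulmxDr mulmxDl.
  + by move=> c x; rewrite scalemxAl scalemxAr.
  move=> [|z v] hv; first by [].
  have := lmul (ZG 0) z v; rewrite [Zv (ZG 0)]/= expr1 => ->.
  case: z hv => [||j] hv /=; rewrite ?mul0mx; try exact: Sp0;
  rewrite (lastI _ v);
  (have := rmul (belast _ v) (last _ v) ZP; rewrite [Zv ZP]/= => ->);
  (case E: (last _ v) => [||k] /=; try exact: Sp0);
  (case: v hv E => [|x v] hv E; first by []);
  apply: Sp_word; (split; [by rewrite size_rcons size_belast | ]);
  rewrite /first_Z /last_Z last_rcons; split; by rewrite Zval_mul.
Qed.

Lemma Vod_Sp : Sp (starP 1) (Vod P0 V).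
Proof.
have -> : Vod P0 V = Zp [:: ZP; ZQ] + Zp [:: ZQ; ZP] by [].
apply: SpD; apply: Sp_word; (split; first by []);
rewrite /first_Z /last_Z; split; by rewrite Zval_mul.
Qed.

Lemma Vd_Sp : Sp (sizeP 1) (Vd P0 V).
Proof.
have -> : Vd P0 V = Zp [:: ZP; ZP] + Zp [:: ZQ; ZQ] by [].
by apply: SpD; apply: Sp_word.
Qed.

Lemma star_size n X : Sp (starP n) X -> Sp (sizeP n) X.
Proof. by move=> [ws [cs [h e]]]; exists ws, cs; split => // i hi; case: (h i hi). Qed.

Lemma Shat_Sp S k m : (forall i, (1 <= i <= m)%N -> Sp (sizeP i) (S i)) ->
  Sp (sizeP m.+1) (Shat_with P0 V S k m).
Proof.
elim: k m => [|k IH] m hS /=.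
  case: eqP => [->|_]; [exact: star_size Vod_Sp | exact: Sp0].
apply: Sp_sum => n1 /andP[h1 h2].
have e : m.+1 = (n1 + (m - n1).+1)%N by lia.
rewrite e; apply: Sp_ad; first by apply: hS; lia.
apply: IH => i hi; apply: hS; lia.
Qed.

Lemma size_Sseq n : size (Sseq P0 G V n) = n.
Proof. by elim: n => [|n IH] //=; rewrite size_rcons IH. Qed.

Lemma Sgen_nth n i : (i < n)%N -> nth 0 (Sseq P0 G V n) i = Sgen P0 G V i.+1.
Proof.
elim: n => [|n IH] // hi /=.
rewrite nth_rcons size_Sseq; case: ltnP => h; first exact: IH.
have -> : i = n by lia.
by rewrite eqxx /Sgen /= nth_rcons size_Sseq ltnn eqxx.
Qed.

Lemma Sgen_succ n : Sgen P0 G V n.+1 = Snext P0 G V (Sseq P0 G V n) n.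
Proof. by rewrite /Sgen /= nth_rcons size_Sseq ltnn eqxx. Qed.

Lemma Sgen_all n : forall i, (1 <= i <= n)%N -> Sp (starP i) (Sgen P0 G V i).
Proof.
elim: n => [|n IH] i /andP[h1 h2]; first by lia.
have [hle|hgt] := leqP i n; first by apply: IH; lia.
have -> : i = n.+1 by lia.
have hS : forall j, (1 <= j <= n)%N -> Sp (sizeP j) (nth 0 (Sseq P0 G V n) j.-1).
  move=> j hj; rewrite Sgen_nth; last by lia.
  rewrite prednK; last by lia.
  by apply: star_size; apply: IH.
rewrite Sgen_succ.
case: n {IH h1 h2 hgt} hS => [|[|n]] hS; rewrite /Snext.
- by apply: Sp_Lop; apply: star_size Vod_Sp.
- by apply: SpN; apply: Sp_Lop; apply: (@Sp_ad 1 1 _ _ Vd_Sp (hS 1%N _)).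
- apply: SpD.
    apply: SpN; apply: Sp_Lop; apply: (@Sp_ad 1 n.+2 _ _ Vd_Sp (hS n.+2 _)).
    by rewrite leqnn.
  apply: Sp_sum => j _; apply: SpZ; apply: Sp_Lop; apply: Shat_Sp => i0 hi.
  exact: hS.
Qed.

Lemma GammaE n X : Sp (sizeP n) X -> Gamma P0 G V n X.
Proof.
move=> [ws [cs [h e]]]; exists ws, cs; split; last by rewrite e big_mkord.
by apply/(all_nthP [::]) => i hi; apply/eqP; apply: h.
Qed.

Lemma GammaStarE n X : Sp (starP n) X -> Gamma_star P0 G V n X.
Proof.
move=> [ws [cs [h e]]]; exists ws, cs; split.
  by apply/(all_nthP [::]) => i hi; apply/eqP; case: (h i hi).
split; last by rewrite e big_mkord.
by move=> i; case: (h i (ltn_ord i)).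
Qed.

Lemma main_sec :
  [/\ Gamma_star P0 G V 1 (Vod P0 V),
      forall n : nat, (1 <= n)%N -> Gamma_star P0 G V n (Sgen P0 G V n)
    & forall k m : nat, Gamma P0 G V m.+1 (Shat P0 G V k m)].
Proof.
split.
- exact: GammaStarE Vod_Sp.
- by move=> n hn; apply: GammaStarE; apply: (Sgen_all n); rewrite hn leqnn.
- move=> k m; apply: GammaE; apply: Shat_Sp => i hi.
  by apply: star_size; apply: (Sgen_all i); rewrite leqnn andbT; case/andP: hi.
Qed.

End Proof.

Theorem lemma3 (C : numClosedFieldType) (N : nat) (H0 V P0 : 'M[C]_N) (E0 : C) :
  herm_mx H0 -> herm_mx V ->
  ground_energy H0 E0 -> ground_projection H0 E0 P0 ->
  let G := reduced_resolvent H0 E0 P0 in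
  [/\ Gamma_star P0 G V 1 (Vod P0 V),
      forall n : nat, (1 <= n)%N -> Gamma_star P0 G V n (Sgen P0 G V n)
    & forall k m : nat, Gamma P0 G V m.+1 (Shat P0 G V k m)].
Proof.
move=> _ _ _ [_ hPP _] G.
apply: main_sec => //.
- by rewrite /G /reduced_resolvent !mulmxA [P0 *m (1%:M - P0)]mulmxBr mulmx1 hPP subrr !mul0mx.
- by rewrite /G /reduced_resolvent -mulmxA [(1%:M - P0) *m P0]mulmxBl mul1mx hPP subrr mulmx0.
Qed.
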